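(* Let $\ell>0$ and $\gamma\in\Sigma^\ell$ with length $\mathscr{L}(\gamma)=L$. Then its arclength parametrization $\Gamma:\mathbb{R}/L\mathbb{Z}\to\mathbb{R}^3$ (starting at $\Gamma(0)=\gamma(0)$, with the same orientation) is also $D_2$-symmetric, i.e. $\Gamma\in\Sigma^L$.
   Context: $R_0=\mathrm{Id}$, $R_1=\mathrm{diag}(1,-1,-1)$, $R_2=\mathrm{diag}(-1,1,-1)$, $R_3=\mathrm{diag}(-1,-1,1)$. For $\ell>0$, on $\mathbb{R}/\ell\mathbb{Z}$: $\psi_0^\ell(t)=t$, $\psi_1^\ell(t)=-t+\ell/2$, $\psi_2^\ell(t)=t-\ell/2$, $\psi_3^\ell(t)=-t+\ell$ (mod $\ell$); $\tau^\ell_{d_i}(\gamma)(t)=R_i\gamma(\psi_i^\ell(t))$. $\Sigma^\ell=\{\gamma\in C^0(\mathbb{R}/\ell\mathbb{Z},\mathbb{R}^3):0<\mathscr{L}(\gamma)<\infty,\ \tau^\ell_{d_i}(\gamma)=\gamma,\ i=0,1,2,3\}$, $\mathscr{L}$ denoting length. *)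

(* Defs.v *)
From Stdlib Require Import Reals Lra List Sorted.
From Coquelicot Require Import Coquelicot.
Open Scope R_scope.

Definition vec3 : Type := (R * R * R)%type.

Definition vx (p : vec3) : R := fst (fst p).
Definition vy (p : vec3) : R := snd (fst p).
Definition vz (p : vec3) : R := snd p.

Definition dist3 (p q : vec3) : R :=
  sqrt ((vx p - vx q) ^ 2 + (vy p - vy q) ^ 2 + (vz p - vz q) ^ 2).

(* A curve on R/lZ is represented as an l-periodic map R -> R^3. *)
Definition periodic (l : R) (g : R -> vec3) : Prop :=
  forall t, g (t + l) = g t.

Definition continuous3 (g : R -> vec3) : Prop :=
  forall t, continuity_pt (fun s => vx (g s)) t /\
            continuity_pt (fun s => vy (g s)) t /\
            continuity_pt (fun s => vz (g s)) t.

Fixpoint polylen (g : R -> vec3) (x : R) (l : list R) : R :=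
  match l with
  | nil => 0
  | y :: l' => dist3 (g x) (g y) + polylen g y l'
  end.

Definition arclen (g : R -> vec3) (a b : R) : Rbar :=
  Lub_Rbar (fun v => exists l : list R,
     Sorted Rle (a :: l) /\ last l a = b /\ v = polylen g a l).

Definition curve_length (l : R) (g : R -> vec3) : Rbar := arclen g 0 l.

Inductive D2 : Type := d0 | d1 | d2 | d3.

Definition Rmat (i : D2) (p : vec3) : vec3 :=
  match i with
  | d0 => p
  | d1 => (vx p, - vy p, - vz p)
  | d2 => (- vx p, vy p, - vz p)
  | d3 => (- vx p, - vy p, vz p)
  end.

(* psi_i^l; reduction mod l is unnecessary since curves are l-periodic. *)
Definition psi (i : D2) (l t : R) : R :=
  match i with
  | d0 => t
  | d1 => - t + l / 2
  | d2 => t - l / 2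
  | d3 => - t + l
  end.

Definition tau (i : D2) (l : R) (g : R -> vec3) : R -> vec3 :=
  fun t => Rmat i (g (psi i l t)).

Definition Sigma (l : R) (g : R -> vec3) : Prop :=
  periodic l g /\ continuous3 g /\
  Rbar_lt 0 (curve_length l g) /\ is_finite (curve_length l g) /\
  forall i : D2, forall t, tau i l g t = g t.

Definition arclength_param (l : R) (g G : R -> vec3) : Prop :=
  periodic (real (curve_length l g)) G /\
  G 0 = g 0 /\
  forall t, 0 <= t <= l -> G (real (arclen g 0 t)) = g t.

(* Main.v *)
Require Import Defs.
From Stdlib Require Import Reals Lra List Sorted ZArith Lia Classical FunctionalExtensionality IndefiniteDescription.
From Coquelicot Require Import Coquelicot.
Open Scope R_scope.

Lemma dist3_pos p q : 0 <= dist3 p q.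
Proof. unfold dist3; apply sqrt_pos. Qed.

Lemma dist3_sym p q : dist3 p q = dist3 q p.
Proof. unfold dist3; f_equal; ring. Qed.

Lemma dist3_self p : dist3 p p = 0.
Proof. unfold dist3. replace ((vx p - vx p) ^ 2 + (vy p - vy p) ^ 2 + (vz p - vz p) ^ 2) with 0 by ring.
  apply sqrt_0. Qed.

Lemma dist3_Rmat i p q : dist3 (Rmat i p) (Rmat i q) = dist3 p q.
Proof. destruct i; unfold dist3, Rmat, vx, vy, vz; simpl; f_equal; ring. Qed.

Lemma Rmat_invol i p : Rmat i (Rmat i p) = p.
Proof. destruct p as [[x y] z]; destruct i; unfold Rmat, vx, vy, vz; simpl; f_equal; try f_equal; ring. Qed.

Lemma dist3_tri p q r : dist3 p r <= dist3 p q + dist3 q r.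
Proof.
  unfold dist3.
  set (u1 := vx p - vx q); set (u2 := vy p - vy q); set (u3 := vz p - vz q).
  set (v1 := vx q - vx r); set (v2 := vy q - vy r); set (v3 := vz q - vz r).
  replace (vx p - vx r) with (u1 + v1) by (unfold u1, v1; ring).
  replace (vy p - vy r) with (u2 + v2) by (unfold u2, v2; ring).
  replace (vz p - vz r) with (u3 + v3) by (unfold u3, v3; ring).
  set (A := u1 ^ 2 + u2 ^ 2 + u3 ^ 2). set (B := v1 ^ 2 + v2 ^ 2 + v3 ^ 2).
  assert (HA : 0 <= A) by (unfold A; nra).
  assert (HB : 0 <= B) by (unfold B; nra).
  pose proof (sqrt_sqrt A HA) as EA. pose proof (sqrt_sqrt B HB) as EB.
  pose proof (sqrt_pos A). pose proof (sqrt_pos B).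
  set (a := sqrt A) in *. set (b := sqrt B) in *.
  assert (Lag : (u1*v1+u2*v2+u3*v3)^2 <= A * B).
  { unfold A, B.
    assert (0 <= (u1*v2-u2*v1)^2 + (u1*v3-u3*v1)^2 + (u2*v3-u3*v2)^2).
    { pose proof (pow2_ge_0 (u1*v2-u2*v1)). pose proof (pow2_ge_0 (u1*v3-u3*v1)).
      pose proof (pow2_ge_0 (u2*v3-u3*v2)). lra. }
    assert ((u1 ^ 2 + u2 ^ 2 + u3 ^ 2) * (v1 ^ 2 + v2 ^ 2 + v3 ^ 2) =
      (u1*v1+u2*v2+u3*v3)^2 + ((u1*v2-u2*v1)^2 + (u1*v3-u3*v1)^2 + (u2*v3-u3*v2)^2)) by ring.
    lra. }
  assert (Hc : u1*v1+u2*v2+u3*v3 <= a * b).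
  { destruct (Rle_dec (u1*v1+u2*v2+u3*v3) 0). { nra. }
    assert (0 <= a*b) by (apply Rmult_le_pos; assumption).
    apply Rnot_lt_le; intro Hlt.
    assert ((a*b)*(a*b) < (u1*v1+u2*v2+u3*v3)^2) by nra.
    assert ((a*b)*(a*b) = A * B) by (rewrite <- EA, <- EB; ring). nra. }
  rewrite <- (sqrt_square (a + b)) by lra.
  apply sqrt_le_1_alt.
  assert ((u1 + v1) ^ 2 + (u2 + v2) ^ 2 + (u3 + v3) ^ 2 = A + B + 2 * (u1*v1+u2*v2+u3*v3)) by (unfold A, B; ring).
  assert ((a + b) * (a + b) = a * a + b * b + 2 * (a * b)) by ring. lra.
Qed.

Lemma dist3_zero p q : dist3 p q = 0 -> p = q.
Proof.
  unfold dist3; intro H.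
  destruct p as [[x y] z]; destruct q as [[x' y'] z']; unfold vx, vy, vz in *; simpl in *.
  pose proof (pow2_ge_0 (x - x')). pose proof (pow2_ge_0 (y - y')). pose proof (pow2_ge_0 (z - z')).
  apply sqrt_eq_0 in H; [|lra].
  assert ((x - x')^2 = 0) by lra. assert ((y - y')^2 = 0) by lra. assert ((z - z')^2 = 0) by lra.
  assert (x = x') by nra. assert (y = y') by nra. assert (z = z') by nra. subst; reflexivity.
Qed.

Lemma dist3_le_sum p q : dist3 p q <= Rabs (vx p - vx q) + Rabs (vy p - vy q) + Rabs (vz p - vz q).
Proof.
  unfold dist3.
  pose proof (Rabs_pos (vx p - vx q)). pose proof (Rabs_pos (vy p - vy q)). pose proof (Rabs_pos (vz p - vz q)).
  rewrite <- sqrt_square by lra. apply sqrt_le_1_alt.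
  rewrite <- (pow2_abs (vx p - vx q)), <- (pow2_abs (vy p - vy q)), <- (pow2_abs (vz p - vz q)).
  nra.
Qed.

Lemma comp_le_dist p q : Rabs (vx p - vx q) <= dist3 p q /\ Rabs (vy p - vy q) <= dist3 p q /\ Rabs (vz p - vz q) <= dist3 p q.
Proof.
  unfold dist3.
  assert (forall a b c, Rabs a <= sqrt (a^2 + b^2 + c^2)).
  { intros a b c. rewrite <- sqrt_Rsqr_abs. apply sqrt_le_1_alt. unfold Rsqr. nra. }
  split; [apply H|]. split.
  - replace ((vx p - vx q) ^ 2 + (vy p - vy q) ^ 2 + (vz p - vz q) ^ 2) with
      ((vy p - vy q) ^ 2 + (vx p - vx q) ^ 2 + (vz p - vz q) ^ 2) by ring. apply H.
  - replace ((vx p - vx q) ^ 2 + (vy p - vy q) ^ 2 + (vz p - vz q) ^ 2) with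
      ((vz p - vz q) ^ 2 + (vx p - vx q) ^ 2 + (vy p - vy q) ^ 2) by ring. apply H.
Qed.
Lemma last_cons {A} (x : A) r d : last (x :: r) d = last r x.
Proof. revert x d. induction r as [|y r IH]; intros x d; [reflexivity|].
  change (last (x :: y :: r) d) with (last (y :: r) d). rewrite IH. symmetry. apply IH. Qed.

Lemma last_app {A} (l1 l2 : list A) a : last (l1 ++ l2) a = last l2 (last l1 a).
Proof. revert a. induction l1 as [|x r IH]; intros a; [reflexivity|].
  change ((x :: r) ++ l2) with (x :: (r ++ l2)). rewrite !last_cons. apply IH. Qed.

Lemma polylen_app g a l1 l2 : polylen g a (l1 ++ l2) = polylen g a l1 + polylen g (last l1 a) l2.
Proof. revert a. induction l1 as [|x r IH]; intros a. simpl. ring. rewrite last_cons.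
  change ((x :: r) ++ l2) with (x :: (r ++ l2)). change (polylen g a (x :: r ++ l2)) with (dist3 (g a) (g x) + polylen g x (r ++ l2)).
  rewrite IH. simpl. ring. Qed.

Lemma polylen_pos g a l : 0 <= polylen g a l.
Proof. revert a; induction l as [|x r IH]; intros a; simpl. lra. pose proof (dist3_pos (g a) (g x)). pose proof (IH x). lra. Qed.

Lemma polylen_map_in (h g' : R -> vec3) f x y l :
  List.Forall (fun u => h (f u) = g' u) l -> h y = g' x -> polylen h y (map f l) = polylen g' x l.
Proof. revert x y. induction l as [|u r IH]; intros x y HF Hy; simpl. reflexivity.
  inversion HF as [|? ? Hu Hr]; subst. rewrite Hy, Hu. f_equal. apply IH; auto. Qed.

Lemma last_map_in {A B} (f : A -> B) l x y : y = f x -> last (map f l) y = f (last l x).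
Proof. revert x y. induction l as [|u r IH]; intros x y Hy. simpl. auto.
  change (map f (u :: r)) with (f u :: map f r). rewrite !last_cons. apply IH; auto. Qed.

Lemma Sorted_snoc l x : Sorted Rle l -> (forall d, l <> nil -> last l d <= x) -> Sorted Rle (l ++ x :: nil).
Proof. induction 1 as [|y r Hr IH Hd]; intros Hl; simpl.
  - constructor; constructor.
  - constructor.
    + apply IH. intros d Hn. specialize (Hl d ltac:(discriminate)). rewrite last_cons in Hl.
      destruct r; [congruence|]. rewrite last_cons in Hl |- *. exact Hl.
    + destruct r as [|z r]; simpl; constructor.
      * specialize (Hl y ltac:(discriminate)). simpl in Hl. exact Hl.
      * inversion Hd; auto.
Qed.

Lemma Sorted_app a l1 l2 : Sorted Rle (a :: l1) -> Sorted Rle (last l1 a :: l2) -> Sorted Rle (a :: l1 ++ l2).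
Proof. revert a. induction l1 as [|x r IH]; intros a H1 H2. exact H2.
  rewrite last_cons in H2. change ((x :: r) ++ l2) with (x :: (r ++ l2)).
  inversion H1 as [|? ? Hs Hh]; subst. inversion Hh; subst. constructor. apply IH; auto.
  constructor. assumption. Qed.

Lemma Sorted_Forall_ge a l : Sorted Rle (a :: l) -> List.Forall (Rle a) l.
Proof. intro H. apply Sorted_StronglySorted in H. inversion H; auto.
  intros x y z; apply Rle_trans. Qed.

Lemma Sorted_le_last a l : Sorted Rle (a :: l) -> List.Forall (fun x => x <= last l a) l /\ a <= last l a.
Proof. revert a. induction l as [|x r IH]; intros a H. simpl. split; [constructor| lra].
  inversion H as [|? ? Hs Hh]; subst. destruct (IH x Hs) as [H5 H6]. rewrite last_cons. split.
  constructor; auto. inversion Hh; subst. lra. Qed.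

Lemma Sorted_bounds a b l : Sorted Rle (a :: l) -> last l a = b -> List.Forall (fun x => a <= x <= b) l /\ a <= b.
Proof. intros H E. pose proof (Sorted_Forall_ge _ _ H) as F1. destruct (Sorted_le_last _ _ H) as [F2 H2].
  rewrite E in F2, H2. split; auto. rewrite Forall_forall in *. intros x Hx. split; auto. Qed.

Lemma Sorted_map_in (P : R -> Prop) f l : List.Forall P l ->
  (forall x y, P x -> P y -> x <= y -> f x <= f y) -> Sorted Rle l -> Sorted Rle (map f l).
Proof. intros HP Hm HS. induction HS as [|x r Hr IH Hd]; simpl. constructor.
  inversion HP; subst. constructor. apply IH; auto.
  destruct r as [|y r]; simpl; constructor. inversion Hd; subst. inversion H2; subst. apply Hm; auto. Qed.

Lemma Sorted_rev_anti f l : (forall x y, x <= y -> f y <= f x) -> Sorted Rle l -> Sorted Rle (rev (map f l)).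
Proof. intros Hm HS. induction HS as [|x r Hr IH Hd]; simpl. constructor.
  apply Sorted_snoc; auto. intros d Hn. destruct r as [|y r]; [simpl in Hn; congruence|].
  simpl. rewrite last_last. inversion Hd; subst. apply Hm; auto. Qed.

Definition plen g (F : list R) : R := match F with nil => 0 | x :: r => polylen g x r end.

Lemma plen_snoc g F y : F <> nil -> plen g (F ++ y :: nil) = plen g F + dist3 (g (last F 0)) (g y).
Proof. destruct F as [|x r]; intros Hn; [congruence|]. rewrite last_cons.
  change ((x :: r) ++ y :: nil) with (x :: (r ++ y :: nil)). unfold plen. rewrite polylen_app. simpl. ring. Qed.

Lemma plen_rev g F : plen g (rev F) = plen g F.
Proof. induction F as [|x r IH]; simpl. reflexivity.
  destruct r as [|y r']. simpl. ring.
  rewrite plen_snoc. rewrite IH. simpl.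
  replace (last (rev r' ++ y :: nil) 0) with y by (symmetry; apply last_last). rewrite dist3_sym. ring.
  simpl. intro E. apply app_eq_nil in E. destruct E; discriminate. Qed.

Lemma plen_map g h f F : (forall u, h (f u) = g u) -> plen h (map f F) = plen g F.
Proof. intros H. destruct F as [|x r]; simpl. reflexivity. apply polylen_map_in. apply Forall_forall; auto. auto. Qed.
Lemma lub_ub (E : R -> Prop) v : E v -> Rbar_le (Finite v) (Lub_Rbar E).
Proof. intros H. destruct (Lub_Rbar_correct E) as [Hu _]. apply Hu, H. Qed.

Lemma lub_fin_ub (E : R -> Prop) v : is_finite (Lub_Rbar E) -> E v -> v <= real (Lub_Rbar E).
Proof. intros Hf H. pose proof (lub_ub E v H) as Hl. rewrite <- Hf in Hl. exact Hl. Qed.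

Lemma lub_le (E : R -> Prop) M : (exists v, E v) -> (forall v, E v -> v <= M) ->
  is_finite (Lub_Rbar E) /\ real (Lub_Rbar E) <= M.
Proof. intros [v Hv] HM. destruct (Lub_Rbar_correct E) as [Hu Hl].
  assert (H1 : Rbar_le (Lub_Rbar E) (Finite M)) by (apply Hl; intros x Hx; apply HM, Hx).
  pose proof (Hu v Hv) as H2.
  destruct (Lub_Rbar E) as [r| |]; simpl in *; try contradiction. split; [reflexivity| exact H1]. Qed.

Lemma lub_approx (E : R -> Prop) eps : is_finite (Lub_Rbar E) -> 0 < eps ->
  exists v, E v /\ real (Lub_Rbar E) - eps < v.
Proof. intros Hf He. apply NNPP. intro Hn.
  assert (HM : forall v, E v -> v <= real (Lub_Rbar E) - eps).
  { intros v Hv. apply Rnot_lt_le. intro Hlt. apply Hn. exists v. split; auto. }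
  destruct (Lub_Rbar_correct E) as [_ Hl].
  assert (H1 : Rbar_le (Lub_Rbar E) (Finite (real (Lub_Rbar E) - eps))) by (apply Hl; intros x Hx; apply HM, Hx).
  rewrite <- Hf in H1. simpl in H1. lra. Qed.

Definition PS g a b := fun v => exists l, Sorted Rle (a::l) /\ last l a = b /\ v = polylen g a l.
Definition Ar g a b := real (arclen g a b).
Definition fin g a b := is_finite (arclen g a b).

Lemma arclen_PS g a b : arclen g a b = Lub_Rbar (PS g a b).
Proof. reflexivity. Qed.

Lemma PS_dist g a b : a <= b -> PS g a b (dist3 (g a) (g b)).
Proof. intros H. exists (b :: nil). split. constructor. constructor; constructor. constructor. exact H.
  split; simpl; [reflexivity| ring]. Qed.

Lemma PS_ge0 g a b v : PS g a b v -> 0 <= v.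
Proof. intros [l [_ [_ ->]]]. apply polylen_pos. Qed.

Lemma PS_le_Ar g a b v : fin g a b -> PS g a b v -> v <= Ar g a b.
Proof. intros Hf Hv. unfold Ar, fin in *. rewrite arclen_PS in *. apply lub_fin_ub; auto. Qed.

Lemma PS_bounds g a b v : PS g a b v -> a <= b.
Proof. intros [l [Hs [Hl _]]]. apply (Sorted_bounds a b l Hs Hl). Qed.

Lemma PS_concat g a b c p q : PS g a b p -> PS g b c q -> PS g a c (p + q).
Proof. intros [l1 [S1 [L1 E1]]] [l2 [S2 [L2 E2]]]. exists (l1 ++ l2). split.
  apply Sorted_app; auto. rewrite L1; auto. split.
  rewrite last_app, L1; auto. rewrite polylen_app, L1. subst; ring. Qed.

Lemma PS_split g a b c r : PS g a c r -> a <= b <= c -> exists p q, PS g a b p /\ PS g b c q /\ r <= p + q.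
Proof. intros [l [S [L E]]]. subst r. revert a S L. induction l as [|x rest IH]; intros a S L Hb.
  - simpl in L. subst c. assert (b = a) by lra. subst b. exists 0, 0. split; [|split].
    exists nil; simpl; repeat split; auto. exists nil; simpl; repeat split; auto. simpl; lra.
  - rewrite last_cons in L. inversion S as [|? ? Sx Hh]; subst. inversion Hh as [|? ? Hax]; subst.
    destruct (Rle_dec x b) as [Hxb|Hxb].
    + destruct (IH x Sx eq_refl ltac:(lra)) as [p [q [[l1 [S1 [L1 E1]]] [Hq Hle]]]].
      exists (dist3 (g a) (g x) + p), q. split; [|split; auto].
      exists (x :: l1). split; [|split].
      * constructor; [exact S1| constructor; exact Hax].
      * rewrite last_cons; exact L1.
      * simpl; rewrite E1; ring.
      * simpl. lra.
    + exists (dist3 (g a) (g b)), (polylen g b (x :: rest)). split; [apply PS_dist; lra|]. split.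
      * exists (x :: rest). split; [|split].
        -- constructor; [exact Sx| constructor; lra].
        -- rewrite last_cons; reflexivity.
        -- reflexivity.
      * simpl. pose proof (dist3_tri (g a) (g b) (g x)). lra.
Qed.

Lemma additivity g a b c : a <= b <= c -> fin g a c ->
  fin g a b /\ fin g b c /\ Ar g a c = Ar g a b + Ar g b c.
Proof. intros Hb Hf.
  assert (F1 : fin g a b /\ Ar g a b <= Ar g a c).
  { unfold fin, Ar. rewrite (arclen_PS g). apply lub_le. exists (dist3 (g a) (g b)); apply PS_dist; lra.
    intros v Hv. pose proof (PS_dist g b c ltac:(lra)). pose proof (PS_ge0 _ _ _ _ H).
    pose proof (PS_le_Ar _ _ _ _ Hf (PS_concat _ _ _ _ _ _ Hv H)). unfold Ar in *; lra. }
  assert (F2 : fin g b c /\ Ar g b c <= Ar g a c).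
  { unfold fin, Ar. rewrite (arclen_PS g). apply lub_le. exists (dist3 (g b) (g c)); apply PS_dist; lra.
    intros v Hv. pose proof (PS_dist g a b ltac:(lra)). pose proof (PS_ge0 _ _ _ _ H).
    pose proof (PS_le_Ar _ _ _ _ Hf (PS_concat _ _ _ _ _ _ H Hv)). unfold Ar in *; lra. }
  destruct F1 as [F1 _]; destruct F2 as [F2 _]. split; auto. split; auto.
  apply Rle_antisym.
  - assert (H : fin g a c /\ Ar g a c <= Ar g a b + Ar g b c).
    { unfold fin at 1, Ar at 1. rewrite arclen_PS. apply lub_le. exists (dist3 (g a) (g c)); apply PS_dist; lra.
      intros r Hr. destruct (PS_split _ _ _ _ _ Hr Hb) as [p [q [Hp [Hq Hle]]]].
      pose proof (PS_le_Ar _ _ _ _ F1 Hp). pose proof (PS_le_Ar _ _ _ _ F2 Hq). unfold Ar in *; lra. }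
    apply H.
  - apply Rnot_lt_le. intro Hlt. set (e := (Ar g a b + Ar g b c - Ar g a c) / 4).
    assert (He : 0 < e) by (unfold e; lra).
    destruct (lub_approx (PS g a b) e F1 He) as [p [Hp Hp']].
    destruct (lub_approx (PS g b c) e F2 He) as [q [Hq Hq']].
    pose proof (PS_le_Ar _ _ _ _ Hf (PS_concat _ _ _ _ _ _ Hp Hq)).
    unfold e in *. unfold Ar in *. change (arclen g a b) with (Lub_Rbar (PS g a b)) in *.
    change (arclen g b c) with (Lub_Rbar (PS g b c)) in *. lra.
Qed.

Lemma dist_le_Ar g a b : a <= b -> fin g a b -> dist3 (g a) (g b) <= Ar g a b.
Proof. intros H Hf. apply PS_le_Ar; auto. apply PS_dist; auto. Qed.

Lemma Ar_ge0 g a b : a <= b -> fin g a b -> 0 <= Ar g a b.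
Proof. intros H Hf. pose proof (dist_le_Ar g a b H Hf). pose proof (dist3_pos (g a) (g b)). lra. Qed.
Lemma polylen_ext_dist (h g : R -> vec3) x l : (forall x y, dist3 (h x) (h y) = dist3 (g x) (g y)) ->
  polylen h x l = polylen g x l.
Proof. intros H. revert x. induction l as [|u r IH]; intros x; simpl. reflexivity. rewrite H, IH. reflexivity. Qed.

Lemma arclen_ext_dist (h g : R -> vec3) a b : (forall x y, dist3 (h x) (h y) = dist3 (g x) (g y)) ->
  arclen h a b = arclen g a b.
Proof. intros H. unfold arclen. apply Lub_Rbar_eqset. intros v.
  split; intros [l [S [L E]]]; exists l; repeat split; auto; rewrite E; [|symmetry]; apply polylen_ext_dist; auto. Qed.

Lemma Sorted_map_mono f l : (forall x y, x <= y -> f x <= f y) -> Sorted Rle l -> Sorted Rle (map f l).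
Proof. intros Hm HS. apply (Sorted_map_in (fun _ => True)); auto. apply Forall_forall; auto. Qed.

Lemma arclen_shift g a b c : arclen g (a + c) (b + c) = arclen (fun u => g (u + c)) a b.
Proof. unfold arclen. apply Lub_Rbar_eqset. intros v. split.
  - intros [l [S [L E]]]. exists (map (fun u => u - c) l). split; [|split].
    + assert (H : Sorted Rle (map (fun u => u - c) (a + c :: l))) by (apply Sorted_map_mono; auto; intros; lra).
      simpl in H. replace (a + c - c) with a in H by ring. exact H.
    + rewrite (last_map_in _ _ (a + c)). rewrite L. ring. ring.
    + rewrite E. symmetry. apply polylen_map_in. apply Forall_forall. intros u _.
      replace (u - c + c) with u by ring. reflexivity. reflexivity.
  - intros [l [S [L E]]]. exists (map (fun u => u + c) l). split; [|split].
    + apply (Sorted_map_mono (fun u => u + c) (a :: l)); auto. intros; lra.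
    + rewrite (last_map_in _ _ a). rewrite L. reflexivity. reflexivity.
    + rewrite E. symmetry. apply polylen_map_in. apply Forall_forall. intros u _. reflexivity. reflexivity.
Qed.

Lemma PS_rev g a b c v : PS g a b v -> PS (fun u => g (c - u)) (c - b) (c - a) v.
Proof. intros [l [S [L E]]]. set (f := fun u => c - u).
  set (h := fun u => g (c - u)).
  assert (SF : Sorted Rle (rev (map f (a :: l)))) by (apply Sorted_rev_anti; auto; intros; unfold f; lra).
  assert (PF : plen h (rev (map f (a :: l))) = plen g (a :: l)).
  { rewrite plen_rev. apply plen_map. intros u. unfold h, f. replace (c - (c - u)) with u by ring. reflexivity. }
  destruct (rev (map f (a :: l))) as [|y l'] eqn:EF.
  { exfalso. apply (f_equal (@length R)) in EF. rewrite length_rev, length_map in EF. simpl in EF. discriminate. }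
  assert (Ey : y = c - b).
  { assert (M : map f (a :: l) = rev l' ++ y :: nil).
    { rewrite <- (rev_involutive (map f (a :: l))), EF. reflexivity. }
    apply (f_equal (fun L => last L 0)) in M. rewrite last_last in M. rewrite <- M.
    change (map f (a :: l)) with (f a :: map f l). rewrite last_cons. rewrite (last_map_in _ _ a); auto.
    rewrite L. reflexivity. }
  assert (El : last l' y = c - a).
  { rewrite <- (last_cons y l' 0), <- EF. simpl. rewrite last_last. reflexivity. }
  exists l'. subst y. split; [exact SF|]. split; [exact El|]. rewrite E. simpl in PF. exact (eq_sym PF).
Qed.

Lemma arclen_rev g a b c : arclen g a b = arclen (fun u => g (c - u)) (c - b) (c - a).
Proof. unfold arclen. apply Lub_Rbar_eqset. intros v. split.
  - apply PS_rev.
  - intros H. apply (PS_rev _ _ _ c) in H.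
    replace (c - (c - a)) with a in H by ring. replace (c - (c - b)) with b in H by ring.
    replace (fun u => g (c - (c - u))) with g in H. exact H.
    apply functional_extensionality. intros u. replace (c - (c - u)) with u by ring. reflexivity.
Qed.
Definition dcont (h : R -> vec3) a := forall eps, 0 < eps ->
  exists del, 0 < del /\ forall u, Rabs (u - a) < del -> dist3 (h a) (h u) < eps.

Lemma cpt_eps f t eps : continuity_pt f t -> 0 < eps ->
  exists del, 0 < del /\ forall u, Rabs (u - t) < del -> Rabs (f t - f u) < eps.
Proof. intros Hc He. destruct (Hc eps He) as [alp [Ha Hu]]. exists alp. split; auto.
  intros u Hut. destruct (Req_dec u t) as [->|Hne].
  - rewrite Rminus_diag, Rabs_R0. exact He.
  - rewrite Rabs_minus_sym. apply (Hu u). split. split. exact I. auto. exact Hut. Qed.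

Lemma cont3_dcont g t : continuous3 g -> dcont g t.
Proof. intros Hc eps He. destruct (Hc t) as [Cx [Cy Cz]].
  destruct (cpt_eps _ _ (eps/3) Cx ltac:(lra)) as [d1 [H1 K1]].
  destruct (cpt_eps _ _ (eps/3) Cy ltac:(lra)) as [d2 [H2 K2]].
  destruct (cpt_eps _ _ (eps/3) Cz ltac:(lra)) as [d3 [H3 K3]].
  exists (Rmin d1 (Rmin d2 d3)). split. apply Rmin_pos; auto. apply Rmin_pos; auto.
  intros u Hu. pose proof (Rmin_l d1 (Rmin d2 d3)). pose proof (Rmin_r d1 (Rmin d2 d3)).
  pose proof (Rmin_l d2 d3). pose proof (Rmin_r d2 d3).
  pose proof (K1 u ltac:(lra)). pose proof (K2 u ltac:(lra)). pose proof (K3 u ltac:(lra)).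
  pose proof (dist3_le_sum (g t) (g u)). lra. Qed.

Lemma gap a lst : List.Forall (Rle a) lst -> exists d, 0 < d /\ List.Forall (fun x => x = a \/ a + d <= x) lst.
Proof. induction lst as [|x r IH]; intros HF. exists 1. split. lra. constructor.
  inversion HF as [|? ? Hx Hr]; subst. destruct (IH Hr) as [d [Hd Hd']].
  destruct (Rle_lt_or_eq_dec a x Hx) as [Hlt|Heq].
  2:{ exists d. split; [exact Hd|]. apply Forall_cons; [left; auto| exact Hd']. }
  - exists (Rmin d (x - a)). split. apply Rmin_pos; lra. apply Forall_cons.
    right. pose proof (Rmin_r d (x - a)). lra.
    rewrite Forall_forall in *. intros y Hy. destruct (Hd' y Hy) as [E|E]; auto. right.
    pose proof (Rmin_l d (x - a)). lra. Qed.

Lemma strip h a b u0 lst : Sorted Rle (a :: lst) -> last lst a = b -> a < u0 <= b ->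
  List.Forall (fun x => x = a \/ u0 <= x) lst ->
  exists lst', Sorted Rle (u0 :: lst') /\ last lst' u0 = b /\
    polylen h a lst <= dist3 (h a) (h u0) + polylen h u0 lst'.
Proof. induction lst as [|x r IH]; intros S L Hu HF.
  - simpl in L. lra.
  - rewrite last_cons in L. inversion S as [|? ? Sx Hh]. inversion HF as [|? ? Hx Hr].
    destruct Hx as [->|Hx].
    + destruct (IH Sx L Hu Hr) as [l' [S' [L' P']]]. exists l'. split; auto. split; auto.
      simpl. rewrite dist3_self. lra.
    + exists (x :: r). split; [|split].
      * constructor; [exact Sx| constructor; exact Hx].
      * rewrite last_cons; auto.
      * simpl. pose proof (dist3_tri (h a) (h u0) (h x)). lra.
Qed.

Lemma RL h a b eps : a < b -> fin h a b -> dcont h a -> 0 < eps ->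
  exists u0, a < u0 <= b /\ fin h a u0 /\ Ar h a u0 < eps.
Proof. intros Hab Hf Hc He.
  destruct (lub_approx (PS h a b) (eps/2) Hf ltac:(lra)) as [r [[lst [S [L E]]] Hr]].
  destruct (Hc (eps/2) ltac:(lra)) as [del [Hdel Hd]].
  destruct (gap a lst (Sorted_Forall_ge _ _ S)) as [d [Hd0 Hgap]].
  set (u0 := Rmin b (a + Rmin del d / 2)).
  assert (Hm : 0 < Rmin del d) by (apply Rmin_pos; auto).
  pose proof (Rmin_l del d). pose proof (Rmin_r del d).
  pose proof (Rmin_l b (a + Rmin del d / 2)). pose proof (Rmin_r b (a + Rmin del d / 2)).
  assert (Hu0 : a < u0 <= b).
  { unfold u0. split; [|lra]. apply Rmin_glb_lt; lra. }
  assert (Hdu : dist3 (h a) (h u0) < eps / 2).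
  { apply Hd. rewrite Rabs_right; unfold u0 in *; lra. }
  destruct (strip h a b u0 lst S L Hu0) as [l' [S' [L' P']]].
  { rewrite Forall_forall in *. intros x Hx. destruct (Hgap x Hx) as [E'|E']; auto. right. unfold u0 in *. lra. }
  destruct (additivity h a u0 b ltac:(lra) Hf) as [F1 [F2 EA]].
  assert (Hq : PS h u0 b (polylen h u0 l')) by (exists l'; auto).
  pose proof (PS_le_Ar _ _ _ _ F2 Hq).
  exists u0. split; auto. split; auto. unfold Ar in *. change (arclen h a b) with (Lub_Rbar (PS h a b)) in *. lra.
Qed.

Lemma LL h a b eps : a < b -> fin h a b -> dcont h b -> 0 < eps ->
  exists u1, a <= u1 < b /\ fin h u1 b /\ Ar h u1 b < eps.
Proof. intros Hab Hf Hc He.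
  set (h' := fun u => h (0 - u)).
  assert (Hf' : fin h' (0 - b) (0 - a)) by (unfold fin, h'; rewrite <- (arclen_rev h a b 0); exact Hf).
  assert (Hc' : dcont h' (0 - b)).
  { intros e He'. destruct (Hc e He') as [del [Hd Hd']]. exists del. split; auto. intros u Hu.
    unfold h'. replace (0 - (0 - b)) with b by ring. apply Hd'. rewrite Rabs_minus_sym.
    replace (b - (0 - u)) with (u - (0 - b)) by ring. exact Hu. }
  destruct (RL h' (0 - b) (0 - a) eps ltac:(lra) Hf' Hc' He) as [u0 [Hu0 [F0 A0]]].
  exists (0 - u0). unfold fin, Ar in *. rewrite (arclen_rev h (0 - u0) b 0).
  replace (0 - (0 - u0)) with u0 by ring. split; [lra|]. split; auto.
Qed.
Definition sA g t := Ar g 0 t.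

Lemma S_fin l g : Sigma l g -> fin g 0 l.
Proof. intros [_ [_ [_ [H _]]]]. exact H. Qed.

Lemma S_finab l g a b : Sigma l g -> 0 <= a <= b -> b <= l -> fin g a b.
Proof. intros HS H1 H2. pose proof (S_fin l g HS) as F.
  destruct (additivity g 0 a l ltac:(lra) F) as [_ [Fa _]].
  destruct (additivity g a b l ltac:(lra) Fa) as [Fab _]. exact Fab. Qed.

Lemma S_add l g a b c : Sigma l g -> 0 <= a <= b -> b <= c <= l -> Ar g a c = Ar g a b + Ar g b c.
Proof. intros HS H1 H2. destruct (additivity g a b c ltac:(lra) (S_finab l g a c HS ltac:(lra) ltac:(lra))) as [_ [_ E]]. exact E. Qed.

Lemma S_s0 l g : 0 < l -> Sigma l g -> Ar g 0 0 = 0.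
Proof. intros Hl HS. pose proof (S_add l g 0 0 0 HS ltac:(lra) ltac:(lra)). lra. Qed.

Lemma S_Lpos l g : Sigma l g -> 0 < Ar g 0 l.
Proof. intros [_ [_ [H1 [H2 _]]]]. unfold curve_length in *. unfold Ar. rewrite <- H2 in H1. exact H1. Qed.

Lemma S_mono l g t u : Sigma l g -> 0 <= t <= u -> u <= l -> Ar g 0 t <= Ar g 0 u /\ Ar g t u = Ar g 0 u - Ar g 0 t.
Proof. intros HS H1 H2. pose proof (S_add l g 0 t u HS ltac:(lra) ltac:(lra)).
  pose proof (Ar_ge0 g t u ltac:(lra) (S_finab l g t u HS ltac:(lra) ltac:(lra))). lra. Qed.

Lemma S_range l g t : 0 < l -> Sigma l g -> 0 <= t <= l -> 0 <= Ar g 0 t <= Ar g 0 l.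
Proof. intros Hl HS H. pose proof (S_s0 l g Hl HS).
  pose proof (S_mono l g 0 t HS ltac:(lra) ltac:(lra)). pose proof (S_mono l g t l HS ltac:(lra) ltac:(lra)). lra. Qed.

Lemma S_per l g t : Sigma l g -> g (t + l) = g t.
Proof. intros [H _]. apply H. Qed.

Lemma S_gl l g : Sigma l g -> g l = g 0.
Proof. intros HS. rewrite <- (S_per l g 0 HS). f_equal. ring. Qed.

Lemma S_sym2 l g x : Sigma l g -> g (x + l / 2) = Rmat Defs.d2 (g x).
Proof. intros HS. destruct HS as [_ [_ [_ [_ H]]]]. specialize (H Defs.d2 (x + l/2)). unfold tau, psi in H.
  replace (x + l / 2 - l / 2) with x in H by ring. rewrite <- H. reflexivity. Qed.

Lemma S_sym3 l g x : Sigma l g -> g (l - x) = Rmat Defs.d3 (g x).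
Proof. intros HS. destruct HS as [_ [_ [_ [_ H]]]]. specialize (H Defs.d3 x). unfold tau, psi in H.
  rewrite <- H, Rmat_invol. f_equal. ring. Qed.

Lemma S_shift l g a b : Sigma l g -> arclen g (a + l / 2) (b + l / 2) = arclen g a b.
Proof. intros HS. rewrite arclen_shift. apply arclen_ext_dist. intros x y.
  rewrite !(S_sym2 l g _ HS). apply dist3_Rmat. Qed.

Lemma S_revl l g a b : Sigma l g -> arclen g a b = arclen g (l - b) (l - a).
Proof. intros HS. rewrite (arclen_rev g a b l). apply arclen_ext_dist. intros x y.
  rewrite !(S_sym3 l g _ HS). apply dist3_Rmat. Qed.

Lemma S_half l g u : 0 < l -> Sigma l g -> 0 <= u <= l / 2 -> Ar g 0 (u + l / 2) = Ar g 0 u + Ar g 0 l / 2.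
Proof. intros Hl HS Hu.
  assert (E1 : Ar g (l/2) l = Ar g 0 (l/2)).
  { unfold Ar. rewrite <- (S_shift l g 0 (l/2) HS). f_equal. f_equal; field. }
  assert (E2 : Ar g (l/2) (u + l/2) = Ar g 0 u).
  { unfold Ar. rewrite <- (S_shift l g 0 u HS). f_equal. f_equal; field. }
  pose proof (S_add l g 0 (l/2) l HS ltac:(lra) ltac:(lra)).
  pose proof (S_add l g 0 u (l/2) HS ltac:(lra) ltac:(lra)).
  pose proof (S_add l g u (l/2) (u + l/2) HS ltac:(lra) ltac:(lra)).
  pose proof (S_add l g 0 u (u + l/2) HS ltac:(lra) ltac:(lra)).
  lra. Qed.

Lemma S_refl l g u : 0 < l -> Sigma l g -> 0 <= u <= l -> Ar g 0 (l - u) = Ar g 0 l - Ar g 0 u.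
Proof. intros Hl HS Hu.
  assert (E : Ar g 0 (l - u) = Ar g u l).
  { unfold Ar. rewrite (S_revl l g 0 (l - u) HS). f_equal. f_equal; ring. }
  pose proof (S_add l g 0 u l HS ltac:(lra) ltac:(lra)). lra. Qed.

Lemma S_dist l g t t' : Sigma l g -> 0 <= t <= l -> 0 <= t' <= l ->
  dist3 (g t) (g t') <= Rabs (Ar g 0 t - Ar g 0 t').
Proof. intros HS Ht Ht'. destruct (Rle_dec t t') as [H|H].
  - pose proof (dist_le_Ar g t t' H (S_finab l g t t' HS ltac:(lra) ltac:(lra))).
    pose proof (S_mono l g t t' HS ltac:(lra) ltac:(lra)). rewrite Rabs_minus_sym, Rabs_right; lra.
  - rewrite dist3_sym. pose proof (dist_le_Ar g t' t ltac:(lra) (S_finab l g t' t HS ltac:(lra) ltac:(lra))).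
    pose proof (S_mono l g t' t HS ltac:(lra) ltac:(lra)). rewrite Rabs_right; lra. Qed.

Lemma S_seq l g t t' : Sigma l g -> 0 <= t <= l -> 0 <= t' <= l -> Ar g 0 t = Ar g 0 t' -> g t = g t'.
Proof. intros HS Ht Ht' E. apply dist3_zero. pose proof (S_dist l g t t' HS Ht Ht').
  rewrite E, Rminus_diag, Rabs_R0 in H. pose proof (dist3_pos (g t) (g t')). lra. Qed.
Lemma S_scont l g t eps : 0 < l -> Sigma l g -> 0 <= t <= l -> 0 < eps ->
  exists del, 0 < del /\ forall u, 0 <= u <= l -> Rabs (u - t) < del -> Rabs (Ar g 0 u - Ar g 0 t) < eps.
Proof. intros Hl HS Ht He.
  assert (Hc : continuous3 g) by (destruct HS as [_ [H _]]; exact H).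
  assert (R1 : exists d1, 0 < d1 /\ forall u, t <= u <= l -> u - t < d1 -> Ar g 0 u - Ar g 0 t < eps).
  { destruct (Rlt_le_dec t l) as [Htl|Htl].
    - destruct (RL g t l eps Htl (S_finab l g t l HS ltac:(lra) ltac:(lra)) (cont3_dcont g t Hc) He) as [u0 [Hu0 [_ A0]]].
      exists (u0 - t). split. lra. intros u Hu Hut.
      pose proof (S_mono l g t u HS ltac:(lra) ltac:(lra)).
      pose proof (S_mono l g u u0 HS ltac:(lra) ltac:(lra)).
      pose proof (S_mono l g t u0 HS ltac:(lra) ltac:(lra)). lra.
    - exists 1. split. lra. intros u Hu Hut. assert (u = t) by lra. subst. lra. }
  assert (R2 : exists d2, 0 < d2 /\ forall u, 0 <= u <= t -> t - u < d2 -> Ar g 0 t - Ar g 0 u < eps).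
  { destruct (Rlt_le_dec 0 t) as [Htl|Htl].
    - destruct (LL g 0 t eps Htl (S_finab l g 0 t HS ltac:(lra) ltac:(lra)) (cont3_dcont g t Hc) He) as [u1 [Hu1 [_ A1]]].
      exists (t - u1). split. lra. intros u Hu Hut.
      pose proof (S_mono l g u t HS ltac:(lra) ltac:(lra)).
      pose proof (S_mono l g u1 u HS ltac:(lra) ltac:(lra)).
      pose proof (S_mono l g u1 t HS ltac:(lra) ltac:(lra)). lra.
    - exists 1. split. lra. intros u Hu Hut. assert (u = t) by lra. subst. lra. }
  destruct R1 as [e1 [He1 K1]]. destruct R2 as [e2 [He2 K2]].
  exists (Rmin e1 e2). split. apply Rmin_pos; auto. intros u Hu Hut.
  pose proof (Rmin_l e1 e2). pose proof (Rmin_r e1 e2).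
  destruct (Rle_dec t u) as [Htu|Htu].
  - rewrite Rabs_right in Hut by lra. pose proof (K1 u ltac:(lra) ltac:(lra)).
    pose proof (S_mono l g t u HS ltac:(lra) ltac:(lra)). rewrite Rabs_right; lra.
  - rewrite Rabs_left in Hut by lra. pose proof (K2 u ltac:(lra) ltac:(lra)).
    pose proof (S_mono l g u t HS ltac:(lra) ltac:(lra)). rewrite Rabs_left1; lra.
Qed.

Definition clamp l x := Rmax 0 (Rmin l x).

Lemma clamp_prop l x : 0 < l -> 0 <= clamp l x <= l.
Proof. intros Hl. unfold clamp, Rmax, Rmin. destruct (Rle_dec l x); destruct (Rle_dec 0 _); lra. Qed.

Lemma clamp_id l x : 0 <= x <= l -> clamp l x = x.
Proof. intros H. unfold clamp, Rmax, Rmin. destruct (Rle_dec l x); destruct (Rle_dec 0 _); lra. Qed.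

Lemma clamp_lip l x y : 0 < l -> Rabs (clamp l x - clamp l y) <= Rabs (x - y).
Proof. intros Hl. unfold clamp, Rmax, Rmin.
  destruct (Rle_dec l x); destruct (Rle_dec l y); repeat (destruct (Rle_dec 0 _));
  unfold Rabs; repeat destruct Rcase_abs; lra. Qed.

Lemma S_surj l g y : 0 < l -> Sigma l g -> 0 <= y <= Ar g 0 l -> exists t, 0 <= t <= l /\ Ar g 0 t = y.
Proof. intros Hl HS Hy. pose proof (S_s0 l g Hl HS) as H0.
  destruct (Req_dec y 0) as [E|Ne]. { exists 0. split. lra. congruence. }
  destruct (Req_dec y (Ar g 0 l)) as [E|Ne']. { exists l. split. lra. congruence. }
  set (f := fun x => Ar g 0 (clamp l x) - y).
  assert (Cf : continuity f).
  { intros x eps He. pose proof (clamp_prop l x Hl) as Cx.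
    destruct (S_scont l g (clamp l x) eps Hl HS Cx He) as [del [Hd K]].
    exists del. split. lra. intros u [_ Hu]. simpl in Hu |- *. unfold R_dist in *. unfold f.
    replace (Ar g 0 (clamp l u) - y - (Ar g 0 (clamp l x) - y)) with (Ar g 0 (clamp l u) - Ar g 0 (clamp l x)) by ring.
    apply K. apply clamp_prop; auto. pose proof (clamp_lip l u x Hl). lra. }
  destruct (IVT f 0 l Cf Hl) as [z [Hz Ez]].
  { unfold f. rewrite clamp_id by lra. lra. }
  { unfold f. rewrite clamp_id by lra. lra. }
  exists z. split; auto. unfold f in Ez. rewrite clamp_id in Ez by lra. lra.
Qed.

Lemma decomp l g x : 0 < l -> Sigma l g ->
  exists t k, 0 <= t <= l /\ x = Ar g 0 t + IZR k * Ar g 0 l.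
Proof. intros Hl HS. set (L := Ar g 0 l). pose proof (S_Lpos l g HS) as HL. fold L in HL.
  set (k := (up (x / L) - 1)%Z). destruct (archimed (x / L)) as [A1 A2].
  assert (Ek : IZR k = IZR (up (x / L)) - 1) by (unfold k; rewrite minus_IZR; reflexivity).
  assert (B1 : IZR k * L <= x).
  { assert (IZR k <= x / L) by lra. apply (Rmult_le_compat_r L) in H; [|lra].
    unfold Rdiv in H. rewrite Rmult_assoc, Rinv_l, Rmult_1_r in H; lra. }
  assert (B2 : x < IZR k * L + L).
  { assert (x / L < IZR k + 1) by lra. apply (Rmult_lt_compat_r L) in H; [|lra].
    unfold Rdiv in H. rewrite Rmult_assoc, Rinv_l, Rmult_1_r in H; lra. }
  destruct (S_surj l g (x - IZR k * L) Hl HS ltac:(fold L; lra)) as [t [Ht Et]].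
  exists t, k. split; auto. fold L. lra.
Qed.

Lemma consist l g t t' k k' : 0 < l -> Sigma l g -> 0 <= t <= l -> 0 <= t' <= l ->
  Ar g 0 t + IZR k * Ar g 0 l = Ar g 0 t' + IZR k' * Ar g 0 l -> g t = g t'.
Proof. intros Hl HS Ht Ht' E. pose proof (S_Lpos l g HS) as HL.
  pose proof (S_range l g t Hl HS Ht). pose proof (S_range l g t' Hl HS Ht').
  set (L := Ar g 0 l) in *. set (s := Ar g 0 t) in *. set (s' := Ar g 0 t') in *.
  assert (Ed : IZR (k' - k) * L = s - s') by (rewrite minus_IZR; lra).
  assert (Hd1 : IZR (k' - k) <= 1).
  { apply Rnot_lt_le. intro Hc. assert (L < IZR (k' - k) * L) by nra. lra. }
  assert (Hd2 : -1 <= IZR (k' - k)).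
  { apply Rnot_lt_le. intro Hc. assert (IZR (k' - k) * L < - L) by nra. lra. }
  apply le_IZR in Hd1. replace (-1) with (IZR (-1)) in Hd2 by reflexivity. apply le_IZR in Hd2.
  assert (C : (k' - k = 0 \/ k' - k = 1 \/ k' - k = -1)%Z) by lia.
  destruct C as [C|[C|C]]; rewrite C in Ed; simpl in Ed.
  - apply (S_seq l g); auto. unfold s, s' in *. lra.
  - assert (E1 : s = L) by lra. assert (E2 : s' = 0) by lra.
    assert (G1 : g t = g l) by (apply (S_seq l g _ _ HS); [lra|lra|exact E1]).
    assert (G2 : g t' = g 0) by (apply (S_seq l g _ _ HS); [lra|lra|]; rewrite (S_s0 l g Hl HS); exact E2).
    rewrite G1, G2. apply (S_gl l g HS).
  - assert (E1 : s' = L) by lra. assert (E2 : s = 0) by lra.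
    assert (G1 : g t' = g l) by (apply (S_seq l g _ _ HS); [lra|lra|exact E1]).
    assert (G2 : g t = g 0) by (apply (S_seq l g _ _ HS); [lra|lra|]; rewrite (S_s0 l g Hl HS); exact E2).
    rewrite G1, G2. symmetry. apply (S_gl l g HS).
Qed.
Lemma Forall_last (P : R -> Prop) l d : List.Forall P l -> l <> nil -> P (last l d).
Proof. induction l as [|x r IH]; intros HF Hn; [congruence|]. rewrite last_cons.
  inversion HF as [|? ? Hx Hr]. destruct r as [|y r']. simpl; auto.
  rewrite last_cons. rewrite <- (last_cons y r' d). apply IH; auto. discriminate. Qed.

Lemma per_Z (G : R -> vec3) L : periodic L G -> forall k x, G (x + IZR k * L) = G x.
Proof. intros HP k. induction k using Z.peano_ind; intros x.
  - simpl. f_equal. ring.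
  - rewrite succ_IZR. replace (x + (IZR k + 1) * L) with ((x + IZR k * L) + L) by ring. rewrite HP. apply IHk.
  - rewrite <- (HP (x + IZR (Z.pred k) * L)).
    replace (x + IZR (Z.pred k) * L + L) with (x + IZR k * L). apply IHk.
    rewrite <- Z.sub_1_r, minus_IZR. simpl. ring.
Qed.

Definition AP l g G := periodic (Ar g 0 l) G /\ G 0 = g 0 /\ forall t, 0 <= t <= l -> G (Ar g 0 t) = g t.

Lemma G_s l g G t k : AP l g G -> 0 <= t <= l -> G (Ar g 0 t + IZR k * Ar g 0 l) = g t.
Proof. intros [HP [_ HG]] Ht. rewrite (per_Z G _ HP). apply HG; auto. Qed.

Lemma G_lip_aux l g t t' (k k' : Z) : 0 < l -> Sigma l g -> 0 <= t <= l -> 0 <= t' <= l -> (k < k')%Z ->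
  dist3 (g t) (g t') <= Rabs ((Ar g 0 t + IZR k * Ar g 0 l) - (Ar g 0 t' + IZR k' * Ar g 0 l)).
Proof. intros Hl HS Ht Ht' Hk.
  assert (Hk' : IZR k + 1 <= IZR k') by (rewrite <- plus_IZR; apply IZR_le; lia).
  pose proof (S_Lpos l g HS) as H0. pose proof (S_range l g t Hl HS Ht) as H1. pose proof (S_range l g t' Hl HS Ht') as H2.
  pose proof (S_dist l g t l HS Ht ltac:(lra)) as H3. pose proof (S_dist l g 0 t' HS ltac:(lra) Ht') as H4.
  rewrite (S_s0 l g Hl HS) in H4. rewrite (S_gl l g HS) in H3.
  pose proof (dist3_tri (g t) (g 0) (g t')).
  rewrite Rabs_minus_sym in H3. rewrite Rabs_right in H3 by lra.
  rewrite Rabs_minus_sym in H4. rewrite Rabs_right in H4 by lra.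
  assert (IZR k * Ar g 0 l + Ar g 0 l <= IZR k' * Ar g 0 l) by nra.
  rewrite Rabs_left1 by lra. lra. Qed.

Lemma G_lip l g G x y : 0 < l -> Sigma l g -> AP l g G -> dist3 (G x) (G y) <= Rabs (x - y).
Proof. intros Hl HS HA. destruct (decomp l g x Hl HS) as [t [k [Ht Ex]]].
  destruct (decomp l g y Hl HS) as [t' [k' [Ht' Ey]]]. subst x y.
  rewrite !(G_s l g G _ _ HA) by auto.
  destruct (Z.lt_trichotomy k k') as [C|[C|C]].
  - apply (G_lip_aux l g); auto.
  - subst k'. replace (Ar g 0 t + IZR k * Ar g 0 l - (Ar g 0 t' + IZR k * Ar g 0 l)) with (Ar g 0 t - Ar g 0 t') by ring.
    apply (S_dist l g); auto.
  - rewrite dist3_sym, Rabs_minus_sym. apply (G_lip_aux l g); auto.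
Qed.

Lemma G_cont l g G : 0 < l -> Sigma l g -> AP l g G -> continuous3 G.
Proof. intros Hl HS HA t.
  assert (K : forall f : vec3 -> R, (forall p q, Rabs (f p - f q) <= dist3 p q) -> continuity_pt (fun s => f (G s)) t).
  { intros f Hf eps He. exists eps. split; auto. intros u [_ Hu]. simpl in *. unfold R_dist in *.
    pose proof (Hf (G u) (G t)). pose proof (G_lip l g G u t Hl HS HA). lra. }
  split; [|split]; apply K; intros p q; apply comp_le_dist.
Qed.

Lemma sigma_fun l g : 0 < l -> Sigma l g ->
  exists sg : R -> R, forall y, 0 <= y <= Ar g 0 l -> 0 <= sg y <= l /\ Ar g 0 (sg y) = y.
Proof. intros Hl HS.
  assert (H : forall y, exists t, 0 <= y <= Ar g 0 l -> 0 <= t <= l /\ Ar g 0 t = y).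
  { intros y. destruct (classic (0 <= y <= Ar g 0 l)) as [Hy|Hy].
    - destruct (S_surj l g y Hl HS Hy) as [t Ht]. exists t; auto.
    - exists 0. intro; contradiction. }
  exists (fun y => proj1_sig (constructive_indefinite_description _ (H y))).
  intros y Hy. destruct (constructive_indefinite_description _ (H y)) as [t Ht]. simpl. auto.
Qed.

Lemma G_len l g G : 0 < l -> Sigma l g -> AP l g G -> arclen G 0 (Ar g 0 l) = Finite (Ar g 0 l).
Proof. intros Hl HS HA. pose proof HA as [HP [H0 HG]].
  set (L := Ar g 0 l) in *. pose proof (S_Lpos l g HS) as HL. fold L in HL.
  destruct (sigma_fun l g Hl HS) as [sg Hsg]. fold L in Hsg.
  assert (A : fin G 0 L /\ Ar G 0 L <= L).
  { unfold fin, Ar. rewrite arclen_PS. apply lub_le. exists (dist3 (G 0) (G L)). apply PS_dist; lra.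
    intros v [lst [S [La E]]]. destruct (Sorted_bounds 0 L lst S La) as [B _]. subst v.
    set (M := map sg lst).
    assert (SM : Sorted Rle M).
    { apply (Sorted_map_in (fun x => 0 <= x <= L)); auto.
      - intros x y Hx Hy Hxy. apply Rnot_lt_le. intro Hc.
        destruct (Hsg x Hx) as [_ Ex]. destruct (Hsg y Hy) as [_ Ey].
        pose proof (S_mono l g (sg y) (sg x) HS ltac:(pose proof (Hsg y Hy); lra) ltac:(pose proof (Hsg x Hx); lra)).
        assert (x = y) by lra. subst y. lra.
      - apply Sorted_inv in S. apply S. }
    assert (FM : List.Forall (fun x => 0 <= x <= l) M).
    { unfold M. rewrite Forall_forall in *. intros x Hx. apply in_map_iff in Hx. destruct Hx as [y [<- Hy]].
      apply Hsg, B, Hy. }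
    assert (S2 : Sorted Rle (0 :: M ++ l :: nil)).
    { constructor. apply Sorted_snoc; auto. intros d Hn. pose proof (Forall_last _ M d FM Hn). simpl in H; lra.
      destruct M as [|x M']; simpl; constructor. lra. inversion FM; lra. }
    assert (PSg : PS g 0 l (polylen g 0 (M ++ l :: nil))).
    { exists (M ++ l :: nil). split; auto. split; auto. apply last_last. }
    pose proof (PS_le_Ar _ _ _ _ (S_fin l g HS) PSg).
    rewrite polylen_app in H. pose proof (polylen_pos g (last M 0) (l :: nil)).
    assert (polylen g 0 M = polylen G 0 lst).
    { unfold M. apply polylen_map_in; auto. rewrite Forall_forall in *. intros u Hu.
      destruct (Hsg u (B u Hu)) as [Hu1 Hu2]. rewrite <- (HG _ Hu1). rewrite Hu2. reflexivity. }
    unfold L, Ar in *. lra. }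
  destruct A as [FG AG].
  assert (B : Ar g 0 l <= Ar G 0 L).
  { assert (H : fin g 0 l /\ Ar g 0 l <= Ar G 0 L).
    { unfold fin at 1, Ar at 1. rewrite (arclen_PS g). apply lub_le. exists (dist3 (g 0) (g l)). apply PS_dist; lra.
      intros v [lst [S [La E]]]. destruct (Sorted_bounds 0 l lst S La) as [B _]. subst v.
      apply PS_le_Ar; auto. exists (map (fun t => Ar g 0 t) lst). split; [|split].
      - assert (Sm : Sorted Rle (map (fun t => Ar g 0 t) (0 :: lst))).
        { apply (Sorted_map_in (fun x => 0 <= x <= l)); auto.
          constructor; [lra|auto]. intros x y Hx Hy Hxy. apply (S_mono l g x y HS); lra. }
        simpl in Sm. rewrite (S_s0 l g Hl HS) in Sm. exact Sm.
      - rewrite (last_map_in _ _ 0). rewrite La. reflexivity. symmetry. apply (S_s0 l g Hl HS).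
      - symmetry. apply polylen_map_in; auto. rewrite Forall_forall in *. intros u Hu. apply HG, B, Hu. }
    apply H. }
  unfold fin in FG. unfold Ar in AG, B |- *. fold L in B. rewrite <- FG. f_equal. unfold L, Ar in *. lra.
Qed.
Lemma G_sym2 l g G x : 0 < l -> Sigma l g -> AP l g G -> Rmat Defs.d2 (G (x - Ar g 0 l / 2)) = G x.
Proof. intros Hl HS HA. destruct (decomp l g x Hl HS) as [u [k [Hu Ex]]]. subst x.
  rewrite (G_s l g G u k HA Hu).
  destruct (Rle_dec (l/2) u) as [C|C].
  - pose proof (S_half l g (u - l/2) Hl HS ltac:(lra)) as E. replace (u - l/2 + l/2) with u in E by ring.
    replace (Ar g 0 u + IZR k * Ar g 0 l - Ar g 0 l / 2) with (Ar g 0 (u - l/2) + IZR k * Ar g 0 l) by lra.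
    rewrite (G_s l g G _ k HA) by lra.
    rewrite <- (S_sym2 l g _ HS). f_equal. ring.
  - pose proof (S_half l g u Hl HS ltac:(lra)) as E.
    replace (Ar g 0 u + IZR k * Ar g 0 l - Ar g 0 l / 2) with (Ar g 0 (u + l/2) + IZR (k - 1) * Ar g 0 l)
      by (rewrite minus_IZR; simpl; lra).
    rewrite (G_s l g G _ _ HA) by lra.
    rewrite (S_sym2 l g _ HS). apply Rmat_invol.
Qed.

Lemma G_sym3 l g G x : 0 < l -> Sigma l g -> AP l g G -> Rmat Defs.d3 (G (- x + Ar g 0 l)) = G x.
Proof. intros Hl HS HA. destruct (decomp l g x Hl HS) as [u [k [Hu Ex]]]. subst x.
  rewrite (G_s l g G u k HA Hu).
  pose proof (S_refl l g u Hl HS Hu) as E.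
  replace (- (Ar g 0 u + IZR k * Ar g 0 l) + Ar g 0 l) with (Ar g 0 (l - u) + IZR (- k) * Ar g 0 l)
    by (rewrite opp_IZR; lra).
  rewrite (G_s l g G _ _ HA) by lra.
  rewrite (S_sym3 l g _ HS). apply Rmat_invol.
Qed.

Lemma Rmat_132 p : Rmat Defs.d1 (Rmat Defs.d3 (Rmat Defs.d2 p)) = p.
Proof. destruct p as [[x y] z]. unfold Rmat, vx, vy, vz; simpl. f_equal; try f_equal; ring. Qed.

Lemma G_Sigma l g G : 0 < l -> Sigma l g -> AP l g G -> Sigma (Ar g 0 l) G.
Proof. intros Hl HS HA. pose proof HA as [HP _].
  pose proof (G_len l g G Hl HS HA) as HLen. pose proof (S_Lpos l g HS) as HL.
  split; [exact HP|]. split; [apply (G_cont l g); auto|].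
  unfold curve_length. rewrite HLen. split; [simpl; lra|]. split; [reflexivity|].
  intros i x. destruct i; unfold tau, psi.
  - reflexivity.
  - change (real (curve_length l g)) with (Ar g 0 l) in *. change (Ar g 0 l) with (Ar g 0 l).
    assert (E3 : Rmat Defs.d3 (G (- (x + Ar g 0 l/2) + Ar g 0 l)) = G (x + Ar g 0 l/2)) by (apply (G_sym3 l g); auto).
    assert (E2 : Rmat Defs.d2 (G (x + Ar g 0 l/2 - Ar g 0 l/2)) = G (x + Ar g 0 l/2)) by (apply (G_sym2 l g); auto).
    replace (- (x + Ar g 0 l/2) + Ar g 0 l) with (- x + Ar g 0 l / 2) in E3 by lra.
    replace (x + Ar g 0 l/2 - Ar g 0 l/2) with x in E2 by lra.
    assert (E : G (- x + Ar g 0 l / 2) = Rmat Defs.d3 (Rmat Defs.d2 (G x))).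
    { rewrite E2, <- E3. symmetry. apply Rmat_invol. }
    rewrite E. apply Rmat_132.
  - apply (G_sym2 l g); auto.
  - apply (G_sym3 l g); auto.
Qed.

Lemma G_exists l g : 0 < l -> Sigma l g -> exists G, arclength_param l g G.
Proof. intros Hl HS.
  assert (H : forall x, exists t, 0 <= t <= l /\ exists k, x = Ar g 0 t + IZR k * Ar g 0 l).
  { intros x. destruct (decomp l g x Hl HS) as [t [k [Ht E]]]. exists t. split; auto. exists k; auto. }
  set (tau' := fun x => proj1_sig (constructive_indefinite_description _ (H x))).
  assert (Ht : forall x, 0 <= tau' x <= l /\ exists k, x = Ar g 0 (tau' x) + IZR k * Ar g 0 l).
  { intros x. unfold tau'. destruct (constructive_indefinite_description _ (H x)) as [t Ht]. exact Ht. }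
  exists (fun x => g (tau' x)). split; [|split].
  - intros x. destruct (Ht x) as [H1 [k E1]]. destruct (Ht (x + Ar g 0 l)) as [H2 [k' E2]].
    apply (consist l g _ _ k' (k + 1) Hl HS H2 H1). rewrite plus_IZR. change (IZR 1) with 1.
    rewrite <- E2. rewrite E1 at 1. ring.
  - destruct (Ht 0) as [H1 [k E1]]. apply (consist l g (tau' 0) 0 k 0 Hl HS H1 ltac:(lra)).
    rewrite (S_s0 l g Hl HS). simpl. lra.
  - intros t Ht0. destruct (Ht (real (arclen g 0 t))) as [H1 [k E1]].
    apply (consist l g _ _ k 0 Hl HS H1 Ht0). simpl. unfold Ar at 3. lra.
Qed.

Theorem lemma3p12 (l : R) (g : R -> vec3) :
  0 < l -> Sigma l g ->
  (exists G : R -> vec3, arclength_param l g G) /\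
  (forall G : R -> vec3, arclength_param l g G ->
     Sigma (real (curve_length l g)) G).
Proof.
  intros Hl HS. split.
  - apply G_exists; auto.
  - intros G HA. apply (G_Sigma l g G Hl HS). exact HA.
Qed.
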